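(* Let $(X,S,\beta)$ be a virtual pair, $H$ a group, and let $(f,g)$ be a noncommutative 2-cocycle pair $X\times X\to H$. If $(\tilde f,g)$ is cohomologous to $(f,g)$, then $(\tilde f,g)$ is also a noncommutative 2-cocycle pair.
   Context: For a bijection $\sigma\colon X\times X\to X\times X$ write $\sigma(x,y)=(\sigma^1(x,y),\sigma^2(x,y))$. A biquandle is a bijection $\sigma$ satisfying $(\mathrm{id}\times\sigma)(\sigma\times\mathrm{id})(\mathrm{id}\times\sigma)=(\sigma\times\mathrm{id})(\mathrm{id}\times\sigma)(\sigma\times\mathrm{id})$, such that for all $x,z$ there is a unique $y$ with $\sigma^1(x,y)=z$, for all $y,t$ there is a unique $x$ with $\sigma^2(x,y)=t$, and there is a bijection $s_\sigma$ with $\{(x,y):\sigma(x,y)=(x,y)\}=\{(x,s_\sigma(x))\}$. A virtual pair $(X,S,\beta)$: biquandles $(X,S),(X,\beta)$ with $\beta^2=\mathrm{id}$ and $(\mathrm{id}\times\beta)(S\times\mathrm{id})(\mathrm{id}\times\beta)=(\beta\times\mathrm{id})(\mathrm{id}\times S)(\beta\times\mathrm{id})$; write $s=s_S$ (also $s_S$) and $s_\beta$. A noncommutative 2-cocycle pair is a pair $f,g\colon X\times X\to H$ such that for all $x,y,z\in X$: (f1) $f(x,y)f(S^2(x,y),z)=f(x,S^1(y,z))f(S^2(x,S^1(y,z)),S^2(y,z))$; (f2) $f(S^1(x,y),S^1(S^2(x,y),z))=f(y,z)$; (f3) $f(x,s(x))=1$; (g1) $g(x,s_\beta(x))=1$;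 (g2) $g(x,y)g(\beta(x,y))=1$; (g3) $g(x,y)g(\beta^2(x,y),z)=g(x,\beta^1(y,z))g(\beta^2(x,\beta^1(y,z)),\beta^2(y,z))$; (g4) $g(y,z)g(\beta^2(x,\beta^1(y,z)),\beta^2(y,z))=g(x,y)g(\beta^1(x,y),\beta^1(\beta^2(x,y),z))$; (g5) $g(y,z)g(x,\beta^1(y,z))=g(\beta^2(x,y),z)g(\beta^1(x,y),\beta^1(\beta^2(x,y),z))$; (m1) $g(y,z)=g(S^1(x,y),\beta^1(S^2(x,y),z))$; (m2) $g(y,z)g(x,\beta^1(y,z))=g(S^2(x,y),z)g(S^1(x,y),\beta^1(S^2(x,y),z))$; (m3) $g(x,\beta^1(y,z))f(\beta^2(x,\beta^1(y,z)),\beta^2(y,z))=f(x,y)g(S^2(x,y),z)$. Two pairs $(f,g)$ and $(\tilde f,\tilde g)$ of maps $X\times X\to H$ are cohomologous if $g=\tilde g$ and there is a map $\lambda\colon X\to H$ with $\tilde f(x,y)=\lambda(x)f(x,y)\lambda(S^2(x,y))^{-1}$ for all $x,y$, where $\lambda$ satisfies, for all $x,y\in X$: $\lambda(x)=\lambda(s_S(x))$, $\lambda(y)=\lambda(S^1(x,y))$, $\lambda(y)=\lambda(\beta^1(x,y))$, and $\lambda(x)$ commutes with $g(x,y)$. *)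

(* Defs.v *)
Set Implicit Arguments.

Record Group := {
  gcar :> Type;
  gmul : gcar -> gcar -> gcar;
  gone : gcar;
  ginv : gcar -> gcar;
  gmulA : forall a b c, gmul a (gmul b c) = gmul (gmul a b) c;
  gmul1l : forall a, gmul gone a = a;
  gmulVl : forall a, gmul (ginv a) a = gone
}.

Section Defs.
Variable X : Type.

Definition is_bijection {A B : Type} (h : A -> B) : Prop :=
  exists k : B -> A, (forall a, k (h a) = a) /\ (forall b, h (k b) = b).

Definition c1 (sigma : X * X -> X * X) (x y : X) : X := fst (sigma (x, y)).
Definition c2 (sigma : X * X -> X * X) (x y : X) : X := snd (sigma (x, y)).

Definition left_act (sigma : X * X -> X * X) (t : X * X * X) : X * X * X :=
  let '(x, y, z) := t in let '(a, b) := sigma (x, y) in (a, b, z).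
Definition right_act (sigma : X * X -> X * X) (t : X * X * X) : X * X * X :=
  let '(x, y, z) := t in let '(b, c) := sigma (y, z) in (x, b, c).

Definition is_s_map (sigma : X * X -> X * X) (s : X -> X) : Prop :=
  is_bijection s /\ (forall x y, sigma (x, y) = (x, y) <-> y = s x).

Definition is_biquandle (sigma : X * X -> X * X) : Prop :=
  is_bijection sigma /\
  (forall t, right_act sigma (left_act sigma (right_act sigma t))
             = left_act sigma (right_act sigma (left_act sigma t))) /\
  (forall x z, exists y, c1 sigma x y = z /\ forall y', c1 sigma x y' = z -> y' = y) /\
  (forall y t, exists x, c2 sigma x y = t /\ forall x', c2 sigma x' y = t -> x' = x) /\
  (exists s, is_s_map sigma s).

Definition is_virtual_pair (S beta : X * X -> X * X) : Prop :=
  is_biquandle S /\ is_biquandle beta /\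
  (forall p, beta (beta p) = p) /\
  (forall t, right_act beta (left_act S (right_act beta t))
             = left_act beta (right_act S (left_act beta t))).

Variable H : Group.
Local Notation "a * b" := (gmul H a b).
Local Notation one := (gone H).

(* s = s_S and sb = s_beta are passed explicitly (they are uniquely determined). *)
Definition is_nc_cocycle_pair (S beta : X * X -> X * X) (s sb : X -> X)
    (f g : X -> X -> H) : Prop :=
  let S1 := c1 S in let S2 := c2 S in let b1 := c1 beta in let b2 := c2 beta in
  (forall x y z, f x y * f (S2 x y) z = f x (S1 y z) * f (S2 x (S1 y z)) (S2 y z)) /\
  (forall x y z, f (S1 x y) (S1 (S2 x y) z) = f y z) /\
  (forall x, f x (s x) = one) /\
  (forall x, g x (sb x) = one) /\
  (forall x y, g x y * g (b1 x y) (b2 x y) = one) /\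
  (forall x y z, g x y * g (b2 x y) z = g x (b1 y z) * g (b2 x (b1 y z)) (b2 y z)) /\
  (forall x y z, g y z * g (b2 x (b1 y z)) (b2 y z) = g x y * g (b1 x y) (b1 (b2 x y) z)) /\
  (forall x y z, g y z * g x (b1 y z) = g (b2 x y) z * g (b1 x y) (b1 (b2 x y) z)) /\
  (forall x y z, g y z = g (S1 x y) (b1 (S2 x y) z)) /\
  (forall x y z, g y z * g x (b1 y z) = g (S2 x y) z * g (S1 x y) (b1 (S2 x y) z)) /\
  (forall x y z, g x (b1 y z) * f (b2 x (b1 y z)) (b2 y z) = f x y * g (S2 x y) z).

Definition cohomologous (S beta : X * X -> X * X) (s : X -> X)
    (f g ft gt : X -> X -> H) : Prop :=
  g = gt /\
  exists lam : X -> H,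
    (forall x, lam x = lam (s x)) /\
    (forall x y, lam y = lam (c1 S x y)) /\
    (forall x y, lam y = lam (c1 beta x y)) /\
    (forall x y, lam x * g x y = g x y * lam x) /\
    (forall x y, ft x y = lam x * f x y * ginv H (lam (c2 S x y))).

End Defs.

Arguments is_nc_cocycle_pair {X H}.
Arguments cohomologous {X H}.

(* Main.v *)
Require Import Defs.
From Stdlib Require Import Setoid.

Section G.
Variable H : Group.
Local Notation "a * b" := (gmul H a b).
Lemma gmulVr (a : H) : a * ginv H a = gone H.
Proof.
  remember (a * ginv H a) as b eqn:Hb.
  assert (bb : b * b = b).
  { rewrite Hb. rewrite <- gmulA. rewrite (gmulA _ (ginv H a) a). rewrite gmulVl, gmul1l. reflexivity. }
  rewrite <- (gmul1l H b). rewrite <- (gmulVl H b) at 1.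
  rewrite <- gmulA, bb. apply gmulVl.
Qed.
Lemma gmul1r (a : H) : a * gone H = a.
Proof. rewrite <- (gmulVl H a), gmulA, gmulVr, gmul1l. reflexivity. Qed.
Lemma gcomm_inv (a b : H) : a * b = b * a -> ginv H a * b = b * ginv H a.
Proof.
  intro E.
  rewrite <- (gmul1r (ginv H a * b)). rewrite <- (gmulVr a).
  rewrite (gmulA _ (ginv H a * b) a). rewrite <- (gmulA _ (ginv H a) b a), <- E.
  rewrite (gmulA _ (ginv H a) a b), gmulVl, gmul1l. reflexivity.
Qed.
Lemma gsimp (a b c d e : H) :
  (a * b * ginv H c) * (c * d * ginv H e) = a * (b * d) * ginv H e.
Proof.
  rewrite !gmulA. f_equal. rewrite <- (gmulA _ _ (ginv H c) c), gmulVl, gmul1r.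
  rewrite <- (gmulA _ a b d). reflexivity.
Qed.
Lemma gl (a g0 b e : H) : a * g0 = g0 * a ->
  g0 * (a * b * ginv H e) = a * (g0 * b) * ginv H e.
Proof. intro E. rewrite !gmulA, <- E. reflexivity. Qed.
Lemma gr (a b c h : H) : c * h = h * c ->
  (a * b * ginv H c) * h = a * (b * h) * ginv H c.
Proof. intro E. apply gcomm_inv in E. rewrite <- !gmulA, E. reflexivity. Qed.
End G.

Lemma left_act_eq (X : Type) (sg : X * X -> X * X) x y z :
  left_act sg (x, y, z) = (c1 sg x y, c2 sg x y, z).
Proof. unfold left_act, c1, c2. destruct (sg (x, y)); reflexivity. Qed.
Lemma right_act_eq (X : Type) (sg : X * X -> X * X) x y z :
  right_act sg (x, y, z) = (x, c1 sg y z, c2 sg y z).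
Proof. unfold right_act, c1, c2. destruct (sg (y, z)); reflexivity. Qed.

Theorem mainTheorem6 (X : Type) (S beta : X * X -> X * X) (s sb : X -> X)
  (H : Group) (f g ft : X -> X -> H) :
  is_virtual_pair S beta ->
  is_s_map S s -> is_s_map beta sb ->
  is_nc_cocycle_pair S beta s sb f g ->
  cohomologous S beta s f g ft g ->
  is_nc_cocycle_pair S beta s sb ft g.
Proof.
  intros [[_ [YS _]] [_ [Binv Mix]]] [_ Sfix] _
    [f1 [f2 [f3 [g1 [g2 [g3 [g4 [g5 [m1 [m2 m3]]]]]]]]]]
    [_ [lam [Ls [L1 [Lb [Lc Ft]]]]]].
  assert (Yc : forall x y z,
    c1 S x (c1 S y z) = c1 S (c1 S x y) (c1 S (c2 S x y) z) /\
    c1 S (c2 S x (c1 S y z)) (c2 S y z) = c2 S (c1 S x y) (c1 S (c2 S x y) z) /\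
    c2 S (c2 S x (c1 S y z)) (c2 S y z) = c2 S (c2 S x y) z).
  { intros x y z. specialize (YS (x, y, z)).
    repeat rewrite ?right_act_eq, ?left_act_eq in YS.
    injection YS; intros E3 E2 E1. repeat split; assumption. }
  assert (Bi1 : forall x w, c1 beta (c1 beta x w) (c2 beta x w) = x).
  { intros. unfold c1, c2. rewrite <- surjective_pairing, Binv. reflexivity. }
  assert (Bi2 : forall x w, c2 beta (c1 beta x w) (c2 beta x w) = w).
  { intros. unfold c1, c2. rewrite <- surjective_pairing, Binv. reflexivity. }
  assert (Lb2 : forall x w, lam (c2 beta x w) = lam x).
  { intros. transitivity (lam (c1 beta (c1 beta x w) (c2 beta x w))); [apply Lb | rewrite Bi1; reflexivity]. }
  assert (Mc : forall x y z, lam (c2 S x (c1 beta y z)) = lam (c2 S (c2 beta x y) z)).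
  { intros x y z. specialize (Mix (x, y, z)).
    repeat rewrite ?right_act_eq, ?left_act_eq in Mix.
    injection Mix; intros E _ _. rewrite <- E.
    rewrite Lb2. reflexivity. }
  unfold is_nc_cocycle_pair.
  repeat split; try assumption.
  - intros x y z. rewrite !Ft.
    destruct (Yc x y z) as [_ [_ E3]]. rewrite E3.
    rewrite !gsimp.
    rewrite f1. reflexivity.
  - intros x y z. rewrite !Ft. rewrite f2. rewrite <- L1.
    destruct (Yc x y z) as [_ [E2 _]]. rewrite <- E2, <- L1. reflexivity.
  - intros x. rewrite Ft, f3, gmul1r.
    assert (E : c2 S x (s x) = s x).
    { unfold c2. rewrite (proj2 (Sfix x (s x)) eq_refl). reflexivity. }
    rewrite E, <- Ls. apply gmulVr.
  - intros x y z. rewrite !Ft. rewrite Lb2.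
    rewrite (gl _ _ _ _ _ (Lc _ _)), (gr _ _ _ _ _ (Lc _ _)).
    pose proof (Mc x (c1 beta y z) (c2 beta y z)) as M. rewrite Bi1 in M.
    rewrite <- M.
    rewrite m3. reflexivity.
Qed.
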